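(* Let $\bm{Z}\in\{0,1\}^n$, $\bm{X}\in\mathbb{R}^{n\times p}$, fix $\sigma^2>0$, let $\bm{S}$ be an $n\times n$ symmetric positive semidefinite matrix, and for $\rho^2\ge0$ let $\bm{\Sigma}=\bm{\Sigma}(\rho^2)=\sigma^2\bm{I}_n+\rho^2\bm{S}$. Assume that $\bm{X}^T\bm{\Sigma}^{-1}\bm{X}$ is invertible and $\bm{Z}^T\bm{\Sigma}^{-1}(\bm{I}_n-\bm{X}(\bm{X}^T\bm{\Sigma}^{-1}\bm{X})^{-1}\bm{X}^T\bm{\Sigma}^{-1})\bm{Z}\neq0$ for all $\rho^2\ge0$. Define $$\Delta(\rho^2)=\frac{\bm{Z}^T\bm{\Sigma}^{-1}(\bm{I}_n-\bm{X}(\bm{X}^T\bm{\Sigma}^{-1}\bm{X})^{-1}\bm{X}^T\bm{\Sigma}^{-1})\bm{S}(\bm{I}_n-\bm{\Sigma}^{-1}\bm{X}(\bm{X}^T\bm{\Sigma}^{-1}\bm{X})^{-1}\bm{X}^T)\bm{\Sigma}^{-1}\bm{Z}}{\big(\bm{Z}^T\bm{\Sigma}^{-1}(\bm{I}_n-\bm{X}(\bm{X}^T\bm{\Sigma}^{-1}\bm{X})^{-1}\bm{X}^T\bm{\Sigma}^{-1})\bm{Z}\big)^2}$$ and $$D(\rho^2)=\big(\bm{Z}^T\bm{\Sigma}^{-1}(\bm{I}_n-\bm{X}(\bm{X}^T\bm{\Sigma}^{-1}\bm{X})^{-1}\bm{X}^T\bm{\Sigma}^{-1})\bm{Z}\big)^{-1}.$$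 Then $\Delta(\rho^2)$ is non-increasing in $\rho^2$ and $D(\rho^2)$ is non-decreasing in $\rho^2$.
   Context: $\Delta(\rho^2)$ equals the weighted sum of squared mean imbalances $\sum_k\lambda_k(\sum_{Z_i=1}w_iv_{ki}-\sum_{Z_i=0}w_iv_{ki})^2$ of the eigenvectors of $\bm{S}$ under the GLS implied weights $\bm{w}$, and $D(\rho^2)=\sum_iw_i^2$ is the weight dispersion, where $\bm{w}=\bm{M}(\bm{I}_n-\bm{\Sigma}^{-1}\bm{X}(\bm{X}^T\bm{\Sigma}^{-1}\bm{X})^{-1}\bm{X}^T)\bm{\Sigma}^{-1}\bm{Z}/[\bm{Z}^T\bm{\Sigma}^{-1}(\bm{I}_n-\bm{X}(\bm{X}^T\bm{\Sigma}^{-1}\bm{X})^{-1}\bm{X}^T\bm{\Sigma}^{-1})\bm{Z}]$ with $M_{ii}=2Z_i-1$. *)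

(* Defs.v *)
From HB Require Import structures.
From mathcomp Require Import all_boot all_order all_algebra.
From mathcomp Require Import reals.
Set Implicit Arguments. Unset Strict Implicit. Unset Printing Implicit Defensive.
Import Order.TTheory GRing.Theory Num.Theory.
Local Open Scope ring_scope.

Section Defs.
Variables (R : realType) (n p : nat).

Definition psd (S : 'M[R]_n) : Prop :=
  S^T = S /\ forall v : 'cV[R]_n, 0 <= (v^T *m S *m v) ord0 ord0.

Definition Sigma (sigma2 rho2 : R) (S : 'M[R]_n) : 'M[R]_n :=
  sigma2%:M + rho2 *: S.

Definition XSXinv (sigma2 rho2 : R) (S : 'M[R]_n) (X : 'M[R]_(n, p)) : 'M[R]_p :=
  invmx (X^T *m invmx (Sigma sigma2 rho2 S) *m X).

Definition quadZ (sigma2 rho2 : R) (S : 'M[R]_n) (X : 'M[R]_(n, p))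
    (Z : 'cV[R]_n) : R :=
  let Si := invmx (Sigma sigma2 rho2 S) in
  (Z^T *m Si *m (1%:M - X *m XSXinv sigma2 rho2 S X *m X^T *m Si) *m Z)
    ord0 ord0.

Definition Delta (sigma2 rho2 : R) (S : 'M[R]_n) (X : 'M[R]_(n, p))
    (Z : 'cV[R]_n) : R :=
  let Si := invmx (Sigma sigma2 rho2 S) in
  let A := XSXinv sigma2 rho2 S X in
  (Z^T *m Si *m (1%:M - X *m A *m X^T *m Si) *m S
       *m (1%:M - Si *m X *m A *m X^T) *m Si *m Z) ord0 ord0
  / (quadZ sigma2 rho2 S X Z) ^+ 2.

Definition Dd (sigma2 rho2 : R) (S : 'M[R]_n) (X : 'M[R]_(n, p))
    (Z : 'cV[R]_n) : R :=
  (quadZ sigma2 rho2 S X Z)^-1.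

End Defs.

(* Main.v *)
Require Import Defs.
From HB Require Import structures.
From mathcomp Require Import all_boot all_order all_algebra.
From mathcomp Require Import reals lra.
Import Order.TTheory GRing.Theory Num.Theory.
Local Open Scope ring_scope.
Set Implicit Arguments. Unset Strict Implicit.

Section Gls.
Variables (R : realType) (n p : nat) (Sg P : 'M[R]_n) (X : 'M[R]_(n, p)) (Z : 'cV[R]_n).
Hypothesis PSg : P *m Sg = 1%:M.
Hypothesis SgP : Sg *m P = 1%:M.
Hypothesis SgT : Sg^T = Sg.
Hypothesis Xu : X^T *m P *m X \in unitmx.
Hypothesis Sgpsd : forall d : 'cV[R]_n, 0 <= (d^T *m Sg *m d) 0 0.

Let A := invmx (X^T *m P *m X).
Definition MM := P - P *m X *m A *m X^T *m P.

Lemma PT : P^T = P.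
Proof.
have h : Sg *m P^T = 1%:M by rewrite -[Sg]SgT -trmx_mul PSg trmx1.
by rewrite -[P^T]mul1mx -PSg -mulmxA h mulmx1.
Qed.

Lemma AT : A^T = A.
Proof. by rewrite /A trmx_inv !trmx_mul trmxK PT mulmxA. Qed.

Lemma Mdef1 : P *m (1%:M - X *m A *m X^T *m P) = MM.
Proof. by rewrite mulmxBr mulmx1 !mulmxA. Qed.

Lemma Mdef2 : (1%:M - P *m X *m A *m X^T) *m P = MM.
Proof. by rewrite mulmxBl mul1mx. Qed.

Lemma MT : MM^T = MM.
Proof. by rewrite /MM linearB /= !trmx_mul !trmxK PT AT !mulmxA. Qed.

Lemma XtM : X^T *m MM = 0.
Proof.
by rewrite /MM mulmxBr !mulmxA /A mulmxV // mul1mx subrr.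
Qed.

Lemma MX : MM *m X = 0.
Proof. by rewrite -[MM]MT -[X]trmxK -trmx_mul XtM trmx0. Qed.

Lemma SgM : Sg *m MM = 1%:M - X *m A *m X^T *m P.
Proof. by rewrite -Mdef1 mulmxA SgP mul1mx. Qed.

Lemma MSgM : MM *m Sg *m MM = MM.
Proof.
by rewrite -mulmxA SgM mulmxBr mulmx1 !mulmxA MX !mul0mx subr0.
Qed.

Definition qq := (Z^T *m MM *m Z) 0 0.
Definition ww := qq^-1 *: (MM *m Z).

Hypothesis qn0 : qq != 0.

Lemma wfeas : X^T *m ww = 0 /\ Z^T *m ww = 1%:M.
Proof.
split; first by rewrite /ww -scalemxAr mulmxA XtM mul0mx scaler0.
rewrite /ww -scalemxAr mulmxA [Z^T *m MM *m Z]mx11_scalar -/qq.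
by rewrite scale_scalar_mx mulVf.
Qed.

Lemma wval : (ww^T *m Sg *m ww) 0 0 = qq^-1.
Proof.
rewrite /ww linearZ /= mxE linearZ /= -scalemxAl -scalemxAl mxE.
rewrite trmx_mul MT.
have -> : Z^T *m MM *m Sg *m (MM *m Z) = Z^T *m MM *m Z by rewrite -[in RHS]MSgM !mulmxA.
by rewrite -/qq mulrA -mulrA mulVf // mulr1.
Qed.

Lemma wS (S : 'M[R]_n) : (ww^T *m S *m ww) 0 0 = (Z^T *m MM *m S *m MM *m Z) 0 0 / qq ^+ 2.
Proof.
rewrite /ww linearZ /= mxE linearZ /= -scalemxAl -scalemxAl mxE.
rewrite trmx_mul MT !mulmxA mulrA -expr2 mulrC exprVn.
done.
Qed.

Lemma wmin v : X^T *m v = 0 -> Z^T *m v = 1%:M -> qq^-1 <= (v^T *m Sg *m v) 0 0.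
Proof.
move=> Xv Zv.
have vSw : (v^T *m Sg *m ww) 0 0 = qq^-1.
  rewrite /ww -scalemxAr mxE -mulmxA (mulmxA Sg) SgM mulmxBl mul1mx mulmxBr !mulmxA.
  rewrite -(trmxK X) -trmx_mul Xv trmx0 !mul0mx subr0 -(trmxK Z) -trmx_mul Zv trmx1.
  by rewrite mxE eqxx mulr1n mulr1.
have wSv : (ww^T *m Sg *m v) 0 0 = qq^-1.
  have tr1 : forall x : 'M[R]_1, x 0 0 = x^T 0 0 by move=> x; rewrite mxE.
  rewrite -vSw tr1.
  by rewrite !trmx_mul trmxK SgT mulmxA.
have := Sgpsd (v - ww).
rewrite linearB /= [(v - ww)^T]linearB /= !mulmxBl.
have sub1 : forall a b : 'M[R]_1, (a - b) 0 0 = a 0 0 - b 0 0 by move=> a b; rewrite !mxE.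
rewrite !sub1 vSw wSv wval.
lra.
Qed.

End Gls.

Lemma e11 (R : realType) (x y : 'M[R]_1) (a b : R) :
  (a *: x + b *: y) 0 0 = a * x 0 0 + b * y 0 0.
Proof. by rewrite !mxE. Qed.

Lemma qfSigma (R : realType) n (s r : R) (S : 'M[R]_n) (v : 'cV[R]_n) :
  (v^T *m Sigma s r S *m v) 0 0 = s * (v^T *m v) 0 0 + r * (v^T *m S *m v) 0 0.
Proof.
rewrite /Sigma mulmxDr mul_mx_scalar -scalemxAr mulmxDl -!scalemxAl.
by rewrite e11.
Qed.

Lemma qf1_ge0 (R : realType) n (v : 'cV[R]_n) : 0 <= (v^T *m v) 0 0.
Proof.
rewrite mxE; apply: sumr_ge0 => i _; rewrite mxE -expr2; exact: sqr_ge0.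
Qed.

Lemma Sigma_unit (R : realType) n (s r : R) (S : 'M[R]_n) :
  0 < s -> 0 <= r -> psd S -> Sigma s r S \in unitmx.
Proof.
move=> s0 r0 [ST Spsd].
rewrite unitmxE unitfE; apply/det0P => -[v vn0 vS].
have h := Spsd v^T; rewrite trmxK in h.
have e : ((v^T)^T *m Sigma s r S *m v^T) 0 0 = 0 by rewrite trmxK vS mul0mx mxE.
rewrite qfSigma trmxK in e.
have hv : (v *m v^T) 0 0 = 0.
  have := @qf1_ge0 _ _ v^T; rewrite trmxK => h2.
  nra.
move: hv; rewrite mxE => /psumr_eq0P hv.
have {}hv := hv (fun i _ => ltac:(rewrite mxE -expr2; exact: sqr_ge0)).
move/eqP: vn0; apply; apply/matrixP => i j; rewrite (ord1 i) mxE.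
by have := hv j isT; rewrite mxE -expr2 => /eqP; rewrite sqrf_eq0 => /eqP.
Qed.

Lemma perrho (R : realType) n p (Z : 'cV[R]_n) (X : 'M[R]_(n, p)) (s r : R) (S : 'M[R]_n) :
  0 < s -> psd S -> 0 <= r ->
  X^T *m invmx (Sigma s r S) *m X \in unitmx -> quadZ s r S X Z != 0 ->
  let w := ww (invmx (Sigma s r S)) X Z in
  [/\ X^T *m w = 0, Z^T *m w = 1%:M,
      Dd s r S X Z = s * (w^T *m w) 0 0 + r * (w^T *m S *m w) 0 0,
      Delta s r S X Z = (w^T *m S *m w) 0 0 &
      forall v, X^T *m v = 0 -> Z^T *m v = 1%:M ->
        Dd s r S X Z <= s * (v^T *m v) 0 0 + r * (v^T *m S *m v) 0 0].
Proof.
move=> s0 Sp r0 Xu qn0 w.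
have Su := Sigma_unit s0 r0 Sp.
set Sg := Sigma s r S.
set P := invmx Sg.
have PSg : P *m Sg = 1%:M by rewrite mulVmx.
have SgP : Sg *m P = 1%:M by rewrite mulmxV.
have SgT : Sg^T = Sg.
  by case: Sp => ST _; rewrite /Sg /Sigma linearD /= linearZ /= ST tr_scalar_mx.
have Sgpsd : forall d : 'cV[R]_n, 0 <= (d^T *m Sg *m d) 0 0.
  move=> d; rewrite qfSigma; case: Sp => _ Sp.
  by apply: addr_ge0; apply: mulr_ge0 => //; [exact: ltW | exact: qf1_ge0].
have qe : quadZ s r S X Z = qq P X Z.
  by rewrite /quadZ /qq -Mdef1 /XSXinv !mulmxA.
rewrite qe in qn0.
have [f1 f2] := wfeas Xu qn0.
split => //.
- by rewrite /Dd qe -qfSigma (wval PSg SgP SgT Xu qn0).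
- rewrite /Delta qe (wS X Z PSg SgT).
  congr (_ / _).
  by rewrite -{1}(Mdef1 P X) -(Mdef2 P X) /XSXinv !mulmxA.
- move=> v Xv Zv; rewrite /Dd qe -qfSigma.
  exact: (wmin PSg SgP SgT Xu Sgpsd qn0).
Qed.

Unset Implicit Arguments. Set Strict Implicit.

Theorem proposition4 (R : realType) (n p : nat)
  (Z : 'cV[R]_n) (X : 'M[R]_(n, p)) (sigma2 : R) (S : 'M[R]_n) :
  (forall i, Z i ord0 = 0 \/ Z i ord0 = 1) ->
  0 < sigma2 ->
  psd S ->
  (forall rho2 : R, 0 <= rho2 ->
     (X^T *m invmx (Sigma sigma2 rho2 S) *m X) \in unitmx) ->
  (forall rho2 : R, 0 <= rho2 -> quadZ sigma2 rho2 S X Z != 0) ->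
  forall r1 r2 : R, 0 <= r1 -> r1 <= r2 ->
    Delta sigma2 r2 S X Z <= Delta sigma2 r1 S X Z /\
    Dd sigma2 r1 S X Z <= Dd sigma2 r2 S X Z.
Proof.
move=> _ s0 Sp Xu qn r1 r2 r10 r12.
move: (r12); rewrite le_eqVlt => /predU1P [<-|lt]; first by split.
have r20 : 0 <= r2 by apply: le_trans r10 r12.
have := @perrho _ _ _ Z X _ _ _ s0 Sp r10 (Xu _ r10) (qn _ r10).
move=> /= [f11 f12 D1 De1 min1].
have := @perrho _ _ _ Z X _ _ _ s0 Sp r20 (Xu _ r20) (qn _ r20).
move=> /= [f21 f22 D2 De2 min2].
have h1 := min1 _ f21 f22.
have h2 := min2 _ f11 f12.
have b2 := proj2 Sp (ww (invmx (Sigma sigma2 r2 S)) X Z).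
rewrite De1 De2 D1 D2; rewrite D1 in h1; rewrite D2 in h2.
split; nra.
Qed.
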